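(* Let $(X_n)_{n\ge0}$ be a Markov chain on $\mathbb Z_+$. Assume there exist $\varepsilon>0$ and $M<\infty$ such that $\mathbb E_i\{X_1-i;\,X_1-i\le M\}\ge\varepsilon$ for all $i\in\mathbb Z_+$, and that there exists a random variable $\zeta\ge0$ with $\mathbb E\zeta<\infty$ such that $\mathbb P_i\{X_1-i\le -j\}\le\mathbb P\{\zeta\ge j\}$ for all $i,j\in\mathbb Z_+$. Then there exists $\gamma>0$ such that $\sup_{i\in\mathbb Z_+}\mathbb E_ie^{\gamma\ell(i)}<\infty$.
   Context: $\mathbb P_i,\mathbb E_i$ denote probability and expectation given $X_0=i$; $\mathbb E_i\{Y;A\}:=\mathbb E_i[Y\mathbf 1_A]$; the local time at $i$ is $\ell(i):=\sum_{n=0}^\infty\mathbf 1\{X_n=i\}$. *)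

(* Defs.v *)
From Stdlib Require Import Reals Lra Lia Arith.
Open Scope R_scope.

(** A Markov chain on Z_+ = nat is given by its transition matrix
    [P i j = P_i{X_1 = j}]. *)
Definition stochastic (P : nat -> nat -> R) : Prop :=
  forall i, (forall j, 0 <= P i j) /\ infinite_sum (P i) 1.

Definition pmf (p : nat -> R) : Prop :=
  (forall k, 0 <= p k) /\ infinite_sum p 1.

Definition indic (b : bool) : R := if b then 1 else 0.

(** Truncated exponential moment of the local time at [i]:
    [trunc_exp P gamma i B n x]
      = E_x[ exp(gamma * #{0 <= k <= n : X_k = i}) ; X_1,...,X_n <= B ]. *)
Fixpoint trunc_exp (P : nat -> nat -> R) (gamma : R) (i B n x : nat) : R :=
  match n with
  | O => exp (gamma * indic (Nat.eqb x i))
  | S m => exp (gamma * indic (Nat.eqb x i)) *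
           sum_f_R0 (fun y => P x y * trunc_exp P gamma i B m y) B
  end.

(** [E_i e^{gamma l(i)}] with [l(i) = sum_{n>=0} 1{X_n = i}] is, by monotone
    convergence, the supremum over n and B of [trunc_exp P gamma i B n i]
    (the integrand is nonnegative and the truncations increase to it).
    [exp_loc_le P gamma i C] expresses [E_i e^{gamma l(i)} <= C]. *)
Definition exp_loc_le (P : nat -> nat -> R) (gamma : R) (i : nat) (C : R) : Prop :=
  forall n B, trunc_exp P gamma i B n i <= C.

(* Main.v *)
Require Import Defs.
From Stdlib Require Import Reals Lra Lia Arith Psatz.
Open Scope R_scope.

Fixpoint sm (f : nat -> R) (n : nat) : R :=
  match n with O => 0 | S n => sm f n + f n end.

Lemma sm_R0 f n : sum_f_R0 f n = sm f (S n).
Proof. induction n; simpl; [lra|]. rewrite IHn. simpl. lra. Qed.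

Lemma sm_le f g n : (forall j, (j < n)%nat -> f j <= g j) -> sm f n <= sm g n.
Proof. induction n; intros H; simpl; [lra|].
  assert (sm f n <= sm g n) by (apply IHn; intros; apply H; lia).
  assert (f n <= g n) by (apply H; lia). lra. Qed.

Lemma sm_ext f g n : (forall j, (j < n)%nat -> f j = g j) -> sm f n = sm g n.
Proof. induction n; intros H; simpl; [lra|].
  rewrite IHn by (intros; apply H; lia). rewrite H by lia. lra. Qed.

Lemma sm_nonneg f n : (forall j, (j < n)%nat -> 0 <= f j) -> 0 <= sm f n.
Proof. induction n; intros H; simpl; [lra|].
  assert (0 <= sm f n) by (apply IHn; intros; apply H; lia).
  assert (0 <= f n) by (apply H; lia). lra. Qed.

Lemma sm_plus f g n : sm (fun j => f j + g j) n = sm f n + sm g n.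
Proof. induction n; simpl; lra. Qed.

Lemma sm_scal c f n : sm (fun j => c * f j) n = c * sm f n.
Proof. induction n; simpl; [lra|]. rewrite IHn. lra. Qed.

Lemma sm_const c n : sm (fun _ => c) n = INR n * c.
Proof. induction n; simpl sm; [simpl; lra|]. rewrite IHn, S_INR. lra. Qed.

Lemma sm_shift f n : sm f (S n) = f 0%nat + sm (fun j => f (S j)) n.
Proof. induction n; simpl in *; [lra|]. rewrite IHn. lra. Qed.

Lemma sm_add f a b : sm f (a + b) = sm f a + sm (fun j => f (a + j)%nat) b.
Proof. induction b; simpl. rewrite Nat.add_0_r; lra.
  rewrite Nat.add_succ_r. simpl. rewrite IHb. lra. Qed.

Lemma sm_mono_n f n m : (forall j, 0 <= f j) -> (n <= m)%nat -> sm f n <= sm f m.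
Proof. intros H Hnm. replace m with (n + (m - n))%nat by lia. rewrite sm_add.
  assert (0 <= sm (fun j => f (n + j)%nat) (m - n)) by (apply sm_nonneg; auto). lra. Qed.

Lemma sm_sub f a K : (forall j, 0 <= f j) -> sm (fun j => f (a + j)%nat) K <= sm f (a + K).
Proof. intros H. rewrite sm_add. assert (0 <= sm f a) by (apply sm_nonneg; auto). lra. Qed.

Lemma sm_rev f n : sm (fun j => f (n - 1 - j)%nat) n = sm f n.
Proof. induction n. reflexivity.
  rewrite sm_shift. simpl sm at 2. rewrite <- IHn.
  replace (S n - 1 - 0)%nat with n by lia.
  rewrite (sm_ext (fun j => f (S n - 1 - S j)%nat) (fun j => f (n - 1 - j)%nat)).
  lra. intros; f_equal; lia. Qed.

Lemma sm_swap (g : nat -> nat -> R) n m :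
  sm (fun y => sm (fun j => g y j) n) m = sm (fun j => sm (fun y => g y j) m) n.
Proof. induction m; simpl.
  - induction n; simpl; [lra|]. rewrite <- IHn. lra.
  - rewrite IHm. rewrite <- sm_plus. reflexivity. Qed.

Lemma sm_ind f m n : (m <= n)%nat -> sm f m = sm (fun j => if (j <? m)%nat then f j else 0) n.
Proof. intros H. replace n with (m + (n - m))%nat by lia. rewrite sm_add.
  rewrite (sm_ext (fun j => if (j <? m)%nat then f j else 0) f).
  rewrite (sm_ext (fun j => if (m + j <? m)%nat then f (m + j)%nat else 0) (fun _ => 0)). rewrite sm_const, Rmult_0_r. lra.
  intros j _. destruct (Nat.ltb_spec (m + j) m); [lia|auto].
  intros j Hj. destruct (Nat.ltb_spec j m); [auto|lia]. Qed.

Lemma le_lim_eventually (a : R) (V : nat -> R) l B :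
  (forall n, (n >= B)%nat -> a <= V n) -> Un_cv V l -> a <= l.
Proof. intros H Hc. destruct (Rle_or_lt a l) as [h|h]; auto.
  destruct (Hc (a - l)) as [N HN]; [lra|].
  specialize (HN (Nat.max N B) ltac:(lia)). specialize (H (Nat.max N B) ltac:(lia)).
  unfold Rdist in HN. apply Rabs_def2 in HN. lra. Qed.

Lemma lim_le_eventually (a : R) (V : nat -> R) l B :
  (forall n, (n >= B)%nat -> V n <= a) -> Un_cv V l -> l <= a.
Proof. intros H Hc. destruct (Rle_or_lt l a) as [h|h]; auto.
  destruct (Hc (l - a)) as [N HN]; [lra|].
  specialize (HN (Nat.max N B) ltac:(lia)). specialize (H (Nat.max N B) ltac:(lia)).
  unfold Rdist in HN. apply Rabs_def2 in HN. lra. Qed.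

Lemma partial_le_sum f l n : (forall j, 0 <= f j) -> infinite_sum f l -> sum_f_R0 f n <= l.
Proof. intros H Hs. apply (le_lim_eventually _ (sum_f_R0 f) l n); auto.
  intros m Hm. rewrite !sm_R0. apply sm_mono_n; auto; lia. Qed.

Lemma sum_le_lim f g l1 l2 : (forall j, f j <= g j) -> infinite_sum f l1 -> infinite_sum g l2 -> l1 <= l2.
Proof. intros H h1 h2. eapply Rle_cv_lim; [|exact h1|exact h2].
  intros n; apply sum_Rle; auto. Qed.

Lemma sm_S f n : sm f (S n) = sm f n + f n.
Proof. reflexivity. Qed.
Lemma sm_0 f : sm f 0 = 0.
Proof. reflexivity. Qed.


Definition zp (z : nat -> R) (J m : nat) : R := z (Nat.max m J).
Definition num (z : nat -> R) (J : nat) (A : R) (b : nat) : R :=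
  A + sm (fun m => INR (S m) * zp z J (S m)) b.
Definition psi (z : nat -> R) (J : nat) (A : R) (b : nat) : R :=
  num z J A b / (INR b * INR (S b)).

Lemma sum_id b : sm (fun m => INR (S m)) b = INR b * INR (S b) / 2.
Proof. induction b. rewrite sm_0; simpl; lra. rewrite sm_S, IHb. rewrite !S_INR. lra. Qed.

Lemma noninc_gen (z : nat -> R) : (forall j, z (S j) <= z j) -> forall a b, (a <= b)%nat -> z b <= z a.
Proof. intros H a b Hab. induction Hab. lra. specialize (H m). lra. Qed.

Section Z.
Variable z : nat -> R.
Hypothesis zpos : forall j, 0 <= z j.
Hypothesis zdec : forall j, z (S j) <= z j.
Variable J : nat.
Variable A : R.
Hypothesis Apos : 0 < A.

Lemma zp_pos m : 0 <= zp z J m. Proof. apply zpos. Qed.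
Lemma zp_dec a b : (a <= b)%nat -> zp z J b <= zp z J a.
Proof. intros; unfold zp; apply noninc_gen; auto; lia. Qed.

Lemma num_lower c b : (c <= b)%nat -> zp z J c * (INR c * INR (S c) / 2) <= num z J A b - A.
Proof. intros Hcb. unfold num. rewrite <- sum_id.
  replace (A + _ - A) with (sm (fun m => INR (S m) * zp z J (S m)) b) by lra.
  rewrite <- sm_scal.
  apply Rle_trans with (sm (fun m => INR (S m) * zp z J (S m)) c).
  apply sm_le. intros j Hj. assert (zp z J c <= zp z J (S j)) by (apply zp_dec; lia).
  assert (0 <= INR (S j)) by apply pos_INR. nra.
  apply sm_mono_n; auto. intros j. assert (0 <= INR (S j)) by apply pos_INR.
  assert (0 <= zp z J (S j)) by apply zp_pos. nra. Qed.

Lemma num_pos b : A <= num z J A b.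
Proof. unfold num. assert (0 <= sm (fun m => INR (S m) * zp z J (S m)) b); [|lra].
  apply sm_nonneg. intros j _. assert (0 <= INR (S j)) by apply pos_INR.
  assert (0 <= zp z J (S j)) by apply zp_pos. nra. Qed.

Lemma num_mono a b : (a <= b)%nat -> num z J A a <= num z J A b.
Proof. intros H. unfold num. assert (sm (fun m => INR (S m) * zp z J (S m)) a <=
   sm (fun m => INR (S m) * zp z J (S m)) b); [|lra].
  apply sm_mono_n; auto. intros j. assert (0 <= INR (S j)) by apply pos_INR.
  assert (0 <= zp z J (S j)) by apply zp_pos. nra. Qed.

Lemma psi_pos b : (1 <= b)%nat -> 0 < psi z J A b.
Proof. intros Hb. unfold psi. assert (1 <= INR b) by (apply (le_INR 1); auto).
  rewrite S_INR. assert (A <= num z J A b) by apply num_pos.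
  apply Rdiv_lt_0_compat; nra. Qed.

Lemma psi_eq b : (1 <= b)%nat -> psi z J A b * (INR b * INR (S b)) = num z J A b.
Proof. intros Hb. unfold psi. assert (1 <= INR b) by (apply (le_INR 1); auto).
  rewrite S_INR. field. lra. Qed.

Lemma num_S b : num z J A (S b) = num z J A b + INR (S b) * zp z J (S b).
Proof. unfold num. rewrite sm_S. lra. Qed.

Lemma psi_dec b : (1 <= b)%nat -> psi z J A (S b) <= psi z J A b.
Proof. intros Hb. assert (1 <= INR b) by (apply (le_INR 1); auto).
  assert (H1 := num_lower b b (le_n b)).
  assert (H2 : zp z J (S b) <= zp z J b) by (apply zp_dec; lia).
  assert (H3 : 0 <= zp z J (S b)) by apply zp_pos.
  unfold psi. rewrite num_S.
  rewrite !S_INR in *.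
  set (nb := num z J A b) in *. set (zb := zp z J b) in *. set (z1 := zp z J (S b)) in *.
  set (x := INR b) in *.
  apply Rmult_le_reg_r with ((x+1) * (x+1+1) * x). nra.
  unfold Rdiv.
  replace ((nb + (x + 1) * z1) * / ((x + 1) * (x + 1 + 1)) * ((x + 1) * (x + 1 + 1) * x)) with
    ((nb + (x + 1) * z1) * x) by (field; nra).
  replace (nb * / (x * (x + 1)) * ((x + 1) * (x + 1 + 1) * x)) with (nb * (x+1+1)) by (field; nra).
  nra. Qed.

Lemma psi_sum K : sm (fun m => psi z J A (S m)) K + num z J A K / INR (S K) =
   A + sm (fun m => zp z J (S m)) K.
Proof. induction K. simpl. unfold num. simpl. lra.
  rewrite (sm_S (fun m => psi z J A (S m))), (sm_S (fun m => zp z J (S m))).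
  rewrite <- Rplus_assoc, <- IHK. unfold psi. rewrite num_S.
  assert (0 <= INR K) by apply pos_INR. rewrite !S_INR. field. lra. Qed.

Lemma psi_sum_le K : sm (fun m => psi z J A (S m)) K <= A + sm (fun m => zp z J (S m)) K.
Proof. rewrite <- psi_sum. assert (0 <= num z J A K / INR (S K)); [|lra].
  assert (A <= num z J A K) by apply num_pos. assert (0 < INR (S K)) by (apply lt_0_INR; lia).
  unfold Rdiv. apply Rmult_le_pos; [lra|]. apply Rlt_le, Rinv_0_lt_compat; lra. Qed.

End Z.


Lemma tail_small (z : nat -> R) mu eta : (forall j, 0 <= z j) ->
  (forall K, sm (fun j => z (S j)) K <= mu) -> 0 < eta ->
  exists J0, (1 <= J0)%nat /\ forall K, sm (fun m => if (J0 <=? m)%nat then z m else 0) K <= eta.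
Proof. intros zpos Hmu Heta.
  set (Z := fun K => sm (fun j => z (S j)) K).
  assert (Hg : Un_growing Z). { intros n. unfold Z. rewrite sm_S. specialize (zpos (S n)). lra. }
  assert (Hub : has_ub Z). { exists mu. intros x [n Hn]. rewrite Hn. apply Hmu. }
  destruct (growing_cv Z Hg Hub) as [l Hl].
  destruct (Hl (eta/2)) as [N HN]; [lra|].
  assert (HT : forall K, sm (fun j => if (N <=? j)%nat then z (S j) else 0) K <= Z (Nat.max K N) - Z N).
  { induction K. simpl. replace (Nat.max 0 N) with N by lia. lra.
    rewrite sm_S. destruct (Nat.leb_spec N K).
    - replace (Nat.max (S K) N) with (S (Nat.max K N)) by lia.
      replace (Nat.max K N) with K in * by lia. unfold Z in *. rewrite sm_S. lra.
    - replace (Nat.max (S K) N) with (Nat.max K N) by lia. lra. }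
  exists (S N). split; [lia|]. intros K.
  apply Rle_trans with (sm (fun m => if (S N <=? m)%nat then z m else 0) (S K)).
  { apply sm_mono_n; [|lia]. intros j. destruct (S N <=? j)%nat; auto; lra. }
  rewrite sm_shift. simpl (S N <=? 0)%nat.
  rewrite (sm_ext _ (fun j => if (N <=? j)%nat then z (S j) else 0)) by (intros; reflexivity).
  specialize (HT K).
  assert (h1 := HN (Nat.max K N) ltac:(lia)). assert (h2 := HN N ltac:(lia)).
  unfold Rdist in *. apply Rabs_def2 in h1. apply Rabs_def2 in h2. lra. Qed.

Lemma ind_const c J K : 0 <= c -> sm (fun j => if (j <? J)%nat then c else 0) K <= INR J * c.
Proof. intros Hc. apply Rle_trans with (sm (fun j => if (j <? J)%nat then c else 0) (K + J)).
  apply sm_mono_n; [|lia]. intros j; destruct (j <? J)%nat; lra.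
  rewrite <- (sm_ind (fun _ => c)) by lia. rewrite sm_const. lra. Qed.

Lemma ind_const2 c J0 : sm (fun m => if (J0 <=? m)%nat then c else 0) (2 * J0) = INR J0 * c.
Proof. replace (2 * J0)%nat with (J0 + J0)%nat by lia. rewrite sm_add.
  rewrite (sm_ext _ (fun _ => 0)). rewrite (sm_ext (fun j => if (J0 <=? J0 + j)%nat then c else 0) (fun _ => c)).
  rewrite !sm_const. lra.
  intros j _. destruct (Nat.leb_spec J0 (J0 + j)); auto; lia.
  intros j Hj. destruct (Nat.leb_spec J0 j); auto; lia. Qed.

Lemma sm_shift_le g k : (forall j, 0 <= g j) -> sm (fun j => g (S j)) k <= sm g (S k).
Proof. intros H. rewrite sm_shift. specialize (H 0%nat). lra. Qed.


Lemma ratio_bound z J A a b r : (forall j, 0 <= z j) -> 0 < A -> (1 <= a)%nat -> (a <= b)%nat ->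
  INR b * INR (S b) <= r * (INR a * INR (S a)) -> psi z J A a <= r * psi z J A b.
Proof. intros zpos HA Ha Hab H.
  assert (e1 : psi z J A a * (INR a * INR (S a)) = num z J A a) by (apply psi_eq; auto).
  assert (hm : num z J A a <= num z J A b) by (apply num_mono; auto).
  assert (hp : 0 < psi z J A b) by (apply psi_pos; auto; lia).
  assert (e2 : psi z J A b * (INR b * INR (S b)) = num z J A b) by (apply psi_eq; auto; lia).
  assert (1 <= INR a) by (apply (le_INR 1); auto). rewrite S_INR in *.
  assert (hpos : 0 < INR a * (INR a + 1)) by nra.
  apply Rmult_le_reg_r with (INR a * (INR a + 1)); auto.
  rewrite S_INR in H.
  apply (Rmult_le_compat_l (psi z J A b)) in H; [|lra].
  rewrite e1. nra. Qed.

Lemma caseA ra rd rL rho : 0 < rho -> 0 <= rd -> rd <= rL -> rL + 1 <= ra -> 3 * rL <= rho * ra ->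
  (ra + rd) * (ra + rd + 1) <= (1 + rho) * (ra * (ra + 1)).
Proof. intros. assert (rd * (2*ra + rd + 1) <= 3 * rL * ra) by nra.
  assert (3 * rL * ra <= rho * ra * ra) by nra. nra. Qed.

Lemma caseB ra rn rb : 1 <= rn -> rn <= 2 * ra -> rb <= 2 * rn -> 0 <= rb ->
  rb * (rb + 1) <= 16 * (ra * (ra + 1)).
Proof. intros. nra. Qed.

Lemma caseC rc rn rb : 1 <= rn -> rn <= 8 * rc -> rn <= 4 * (rc + 1) -> rb <= 2 * rn -> 0 <= rb ->
  rb * (rb + 1) <= 192 * (rc * (rc + 1)).
Proof. intros. assert (rn * rn <= 32 * (rc * (rc+1))) by nra. nra. Qed.


Lemma analysis (eps mu : R) (Mn : nat) (z : nat -> R) :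
 0 < eps -> (forall j, 0 <= z j) -> (forall j, z (S j) <= z j) ->
 (forall K, sm (fun j => z (S j)) K <= mu) ->
 exists (s : nat -> R) (Sb : R), (forall m, 0 < s m) /\ (forall m, s (S m) <= s m) /\
   (forall K, sm s K <= Sb) /\
   forall k, sm (fun j => (s (k - S j)%nat - s (k + Mn)%nat) * z (S j)) k <= eps * s (k + Mn)%nat.
Proof.
  intros Heps zpos zdec Hmu.
  assert (Hmu0 : 0 <= mu) by (specialize (Hmu 0%nat); simpl in Hmu; lra).
  set (eta := eps / 4656).
  assert (Heta : 0 < eta) by (unfold eta; lra).
  destruct (tail_small z mu eta zpos Hmu Heta) as [J0 [HJ0 Htail]].
  set (J := (2 * J0)%nat).
  set (A := eta).
  assert (HA : 0 < A) by (unfold A; lra).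
  assert (HzJ : INR J * z J <= 2 * eta).
  { assert (INR J0 * z J <= eta).
    { rewrite <- ind_const2. eapply Rle_trans; [|apply (Htail (2 * J0)%nat)].
      apply sm_le. intros m Hm. destruct (Nat.leb_spec J0 m); [|lra].
      apply noninc_gen; auto. unfold J; lia. }
    unfold J in *. rewrite mult_INR. simpl (INR 2). lra. }
  assert (Hzp : forall K, sm (fun m => zp z J (S m)) K <= 3 * eta).
  { intros K.
    apply Rle_trans with (sm (fun m => (if (m <? J)%nat then z J else 0) +
                                        (if (J0 <=? S m)%nat then z (S m) else 0)) K).
    { apply sm_le. intros m _. unfold zp. destruct (Nat.ltb_spec m J).
      - replace (Nat.max (S m) J) with J by lia. destruct (J0 <=? S m)%nat; [specialize (zpos (S m))|]; lra.
      - replace (Nat.max (S m) J) with (S m) by lia. destruct (Nat.leb_spec J0 (S m)); [lra|unfold J in *; lia]. }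
    rewrite sm_plus.
    assert (h1 := ind_const (z J) J K (zpos J)).
    assert (h2 : sm (fun m => if (J0 <=? S m)%nat then z (S m) else 0) K <= eta).
    { eapply Rle_trans; [apply (sm_shift_le (fun m => if (J0 <=? m)%nat then z m else 0))|apply Htail].
      intros j; destruct (J0 <=? j)%nat; auto; lra. }
    lra. }
  set (rho := eps / (3 * (mu + 1))).
  assert (Hrho : 0 < rho) by (unfold rho; apply Rdiv_lt_0_compat; lra).
  set (L := (J + Mn)%nat).
  destruct (INR_unbounded (INR J + INR L + 1 + 3 * INR L / rho)) as [N1 HN1].
  set (N := (N1 + 2 * J + Mn + 8)%nat).
  set (s := fun k => psi z J A (k + N)).
  assert (Hpsipos : forall b, (1 <= b)%nat -> 0 < psi z J A b) by (intros; apply psi_pos; auto).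
  assert (Hsum : forall K, sm s K <= A + 3 * eta).
  { intros K. unfold s.
    rewrite (sm_ext _ (fun k => psi z J A (S (N - 1 + k)))) by (intros; f_equal; unfold N; lia).
    eapply Rle_trans. apply (sm_sub (fun m => psi z J A (S m))). intros; apply Rlt_le, Hpsipos; lia.
    eapply Rle_trans. apply psi_sum_le; auto. specialize (Hzp (N - 1 + K)%nat). lra. }
  exists s, (A + 3 * eta). split; [|split; [|split]].
  - intros m; unfold s; apply Hpsipos; unfold N; lia.
  - intros m; unfold s. simpl (S m + N)%nat. apply psi_dec; auto. unfold N; lia.
  - exact Hsum.
  - intros k. destruct k as [|k'].
    { simpl. assert (0 < s Mn) by (apply Hpsipos; unfold N; lia). nra. }
    set (k := S k').
    set (u := s (k + Mn)%nat).
    assert (Hu : 0 < u) by (unfold u, s; apply Hpsipos; unfold N; lia).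
    set (n := (k + N)%nat).
    assert (Hterm : forall j, (j < k)%nat ->
      (s (k - S j)%nat - u) * z (S j) <=
        (if (S j <? J)%nat then rho * u * z (S j) else 0) +
        (if (J <=? S j)%nat then 16 * u * z (S j) else 0) + 384 * u * s (k - S j)%nat).
    { intros j Hj.
      assert (Hsj : 0 < s (k - S j)%nat) by (unfold s; apply Hpsipos; unfold N; lia).
      assert (Hzj := zpos (S j)).
      set (a := (k - S j + N)%nat). set (b := (k + Mn + N)%nat).
      assert (Hsa : s (k - S j)%nat = psi z J A a) by reflexivity.
      assert (Hub : u = psi z J A b) by reflexivity.
      destruct (Nat.ltb_spec (S j) J).
      -
        assert (Hr : psi z J A a <= (1 + rho) * u).
        { rewrite Hub. apply ratio_bound; auto. unfold a, N; lia. unfold a, b; lia.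
          rewrite !S_INR.
          replace (INR b) with (INR a + INR (S j + Mn)) by (rewrite <- plus_INR; f_equal; unfold a, b; lia).
          apply caseA with (INR L); auto. apply pos_INR. apply le_INR; unfold L; lia.
          - assert (INR N1 <= INR a) by (apply le_INR; unfold a, N; lia).
            assert (0 <= 3 * INR L / rho) by (apply Rmult_le_pos; [|apply Rlt_le, Rinv_0_lt_compat]; try apply Rmult_le_pos; try lra; apply pos_INR).
            assert (0 <= INR J) by apply pos_INR. lra.
          - assert (INR N1 <= INR a) by (apply le_INR; unfold a, N; lia).
            assert (0 <= INR J) by apply pos_INR. assert (0 <= INR L) by apply pos_INR.
            assert (HH : 3 * INR L / rho <= INR a) by lra.
            apply (Rmult_le_compat_l rho) in HH; [|lra].
            replace (rho * (3 * INR L / rho)) with (3 * INR L) in HH by (field; lra). lra. }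
        destruct (Nat.leb_spec J (S j)); [lia|].
        rewrite Hsa in *. assert (0 <= 384 * u * psi z J A a) by (apply Rmult_le_pos; lra).
        assert ((psi z J A a - u) * z (S j) <= rho * u * z (S j)) by (apply Rmult_le_compat_r; lra).
        lra.
      - destruct (Nat.leb_spec J (S j)); [|lia].
        assert (HzJ' : z (S j) = zp z J (S j)) by (unfold zp; f_equal; lia).
        destruct (Nat.le_gt_cases (2 * S j) n).
        +
          assert (Hr : psi z J A a <= 16 * u).
          { rewrite Hub. apply ratio_bound; auto. unfold a, N; lia. unfold a, b; lia.
            rewrite !S_INR. apply caseB with (INR n).
            - apply (le_INR 1); unfold n, N; lia.
            - replace 2 with (INR 2) by reflexivity. rewrite <- mult_INR. apply le_INR. unfold a, n in *; lia.
            - replace 2 with (INR 2) by reflexivity. rewrite <- mult_INR. apply le_INR. unfold b, n, N in *; lia.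
            - apply pos_INR. }
          rewrite Hsa in *. assert (0 <= 384 * u * psi z J A a) by (apply Rmult_le_pos; lra).
          assert ((psi z J A a - u) * z (S j) <= 16 * u * z (S j)) by (apply Rmult_le_compat_r; lra).
          lra.
        +
          set (c := (n / 4)%nat).
          assert (Hc1 : (4 * c <= n)%nat) by (apply Nat.Div0.mul_div_le; lia).
          assert (Hc2 : (n < 4 * (c + 1))%nat).
          { pose proof (Nat.div_mod n 4 ltac:(lia)). pose proof (Nat.mod_upper_bound n 4 ltac:(lia)). unfold c; lia. }
          assert (Hzc : zp z J c <= 384 * u).
          { assert (hl : zp z J c * (INR c * INR (S c) / 2) <= num z J A b - A) by (apply num_lower; auto; unfold c, b, n, N in *; lia).
            assert (he : psi z J A b * (INR b * INR (S b)) = num z J A b) by (apply psi_eq; auto; unfold b; lia).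
            assert (hbc : INR b * INR (S b) <= 192 * (INR c * INR (S c))).
            { rewrite !S_INR. apply caseC with (INR n).
              - apply (le_INR 1); unfold n, N; lia.
              - replace 8 with (INR 8) by (simpl; lra). rewrite <- mult_INR. apply le_INR. unfold n, N in *; lia.
              - replace 4 with (INR 4) by (simpl; lra). rewrite <- S_INR, <- mult_INR. apply le_INR. lia.
              - replace 2 with (INR 2) by reflexivity. rewrite <- mult_INR. apply le_INR. unfold b, n, N in *; lia.
              - apply pos_INR. }
            assert (hcpos : 0 < INR c * INR (S c)).
            { assert (1 <= INR c) by (apply (le_INR 1); unfold n, N in *; lia). rewrite S_INR. nra. }
            rewrite <- Hub in he. assert (Hzc0 := zp_pos z zpos J c).
            apply Rmult_le_reg_r with (INR c * INR (S c)); auto. nra. }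
          assert (Hzsj : z (S j) <= 384 * u).
          { rewrite HzJ'. eapply Rle_trans; [|exact Hzc]. apply zp_dec; auto. lia. }
          assert (0 <= 16 * u * z (S j)) by (apply Rmult_le_pos; lra).
          assert ((s (k - S j)%nat - u) * z (S j) <= s (k - S j)%nat * (384 * u)).
          { apply Rle_trans with (s (k - S j)%nat * z (S j)). nra. apply Rmult_le_compat_l; lra. }
          destruct (Nat.ltb_spec (S j) J); [lia|]. lra. }
    eapply Rle_trans. apply sm_le. exact Hterm.
    rewrite !sm_plus.
    assert (T1 : sm (fun j => if (S j <? J)%nat then rho * u * z (S j) else 0) k <= rho * u * mu).
    { eapply Rle_trans. apply sm_le with (g := fun j => rho * u * z (S j)).
      intros j _. destruct (S j <? J)%nat; [lra|]. assert (0 <= rho * u) by nra. specialize (zpos (S j)). nra.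
      rewrite sm_scal. apply Rmult_le_compat_l. nra. apply Hmu. }
    assert (T2 : sm (fun j => if (J <=? S j)%nat then 16 * u * z (S j) else 0) k <= 16 * u * eta).
    { eapply Rle_trans. apply sm_le with (g := fun j => 16 * u * (if (J0 <=? S j)%nat then z (S j) else 0)).
      intros j _. destruct (Nat.leb_spec J (S j)); destruct (Nat.leb_spec J0 (S j)); try lra; try (unfold J in *; lia).
      specialize (zpos (S j)). nra.
      rewrite sm_scal. apply Rmult_le_compat_l. lra.
      eapply Rle_trans; [apply (sm_shift_le (fun m => if (J0 <=? m)%nat then z m else 0))|apply Htail].
      intros j; destruct (J0 <=? j)%nat; auto; lra. }
    assert (T3 : sm (fun j => 384 * u * s (k - S j)%nat) k <= 384 * u * (A + 3 * eta)).
    { rewrite sm_scal. apply Rmult_le_compat_l. lra.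
      rewrite (sm_ext _ (fun j => s (k - 1 - j)%nat)) by (intros; f_equal; lia).
      rewrite sm_rev. apply Hsum. }
    assert (rho * u * mu <= eps / 3 * u).
    { assert (rho * mu <= eps / 3).
      { unfold rho. apply Rmult_le_reg_r with (3 * (mu + 1)). lra.
        replace (eps / (3 * (mu + 1)) * mu * (3 * (mu + 1))) with (eps * mu) by (field; lra). nra. }
      nra. }
    assert (16 * u * eta + 384 * u * (A + 3 * eta) = eps / 3 * u) by (unfold A, eta; field).
    eapply Rle_trans. apply Rplus_le_compat; [apply Rplus_le_compat|]; eassumption.
    clear -H H0 Hu Heps. clearbody u. clear k s. rewrite Rplus_assoc, H0. assert (0 < eps * u) by (apply Rmult_lt_0_compat; auto). lra.
Qed.


Lemma inf_sum_lin a b f g la lb : infinite_sum f la -> infinite_sum g lb ->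
  infinite_sum (fun j => a * f j + b * g j) (a * la + b * lb).
Proof. intros hf hg e He.
  destruct (hf (e / (4 * (Rabs a + 1)))) as [N1 H1].
  { apply Rdiv_lt_0_compat; [lra|]. pose proof (Rabs_pos a); lra. }
  destruct (hg (e / (4 * (Rabs b + 1)))) as [N2 H2].
  { apply Rdiv_lt_0_compat; [lra|]. pose proof (Rabs_pos b); lra. }
  exists (Nat.max N1 N2). intros n Hn.
  specialize (H1 n ltac:(lia)). specialize (H2 n ltac:(lia)). unfold Rdist in *.
  rewrite sm_R0, sm_plus, !sm_scal, <- !sm_R0.
  replace (a * sum_f_R0 f n + b * sum_f_R0 g n - (a * la + b * lb)) with
    (a * (sum_f_R0 f n - la) + b * (sum_f_R0 g n - lb)) by ring.
  eapply Rle_lt_trans. apply Rabs_triang. rewrite !Rabs_mult.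
  pose proof (Rabs_pos a). pose proof (Rabs_pos b).
  assert (Rabs a * Rabs (sum_f_R0 f n - la) <= (Rabs a + 1) * (e / (4 * (Rabs a + 1)))) by
    (apply Rmult_le_compat; try lra; apply Rabs_pos).
  assert (Rabs b * Rabs (sum_f_R0 g n - lb) <= (Rabs b + 1) * (e / (4 * (Rabs b + 1)))) by
    (apply Rmult_le_compat; try lra; apply Rabs_pos).
  replace ((Rabs a + 1) * (e / (4 * (Rabs a + 1)))) with (e/4) in * by (field; lra).
  replace ((Rabs b + 1) * (e / (4 * (Rabs b + 1)))) with (e/4) in * by (field; lra).
  lra. Qed.

Lemma inf_sum_0 : infinite_sum (fun _ => 0) 0.
Proof. intros e He. exists 0%nat. intros n _. unfold Rdist. rewrite sm_R0, sm_const.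
  rewrite Rmult_0_r, Rminus_0_r, Rabs_R0. lra. Qed.

Lemma inf_sum_scal a f la : infinite_sum f la -> infinite_sum (fun j => a * f j) (a * la).
Proof. intros h. assert (H := inf_sum_lin a 0 f (fun _ => 0) la 0 h inf_sum_0).
  intros e He. destruct (H e He) as [N HN]. exists N. intros n Hn. specialize (HN n Hn).
  rewrite sm_R0 in *. rewrite (sm_ext _ (fun j => a * f j + 0 * 0)) by (intros; ring).
  replace (a * la) with (a * la + 0 * 0) by ring. auto. Qed.

Lemma inf_sum_comb f g a b la lb :
  infinite_sum f la -> infinite_sum g lb -> infinite_sum (fun j => a * f j - b * g j) (a * la - b * lb).
Proof. intros hf hg. assert (H := inf_sum_lin a (- b) f g la lb hf hg).
  intros e He. destruct (H e He) as [N HN]. exists N. intros n Hn. specialize (HN n Hn).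
  rewrite sm_R0 in *. rewrite (sm_ext _ (fun j => a * f j + - b * g j)) by (intros; ring).
  replace (a * la - b * lb) with (a * la + - b * lb) by ring. auto. Qed.


Definition zf (pz : nat -> R) (j : nat) : R := 1 - sm pz j.

Section PZ.
Variable pz : nat -> R.
Hypothesis hpz : pmf pz.

Lemma pz_pos k : 0 <= pz k. Proof. apply (proj1 hpz). Qed.

Lemma sm_pz_le1 j : sm pz j <= 1.
Proof. apply Rle_trans with (sm pz (S j)). apply sm_mono_n; [apply pz_pos|lia].
  rewrite <- sm_R0. apply partial_le_sum; [apply pz_pos|apply (proj2 hpz)]. Qed.

Lemma zf_sum j : infinite_sum (fun k => pz (k + j)%nat) (zf pz j).
Proof. intros e He. destruct (proj2 hpz e He) as [N HN]. exists N. intros n Hn.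
  specialize (HN (j + n)%nat ltac:(lia)). unfold Rdist in *. rewrite sm_R0 in *.
  unfold zf. rewrite (sm_ext _ (fun k => pz (j + k)%nat)) by (intros; f_equal; lia).
  replace (S (j + n)) with (j + S n)%nat in HN by lia. rewrite sm_add in HN.
  replace (sm (fun k => pz (j + k)%nat) (S n) - (1 - sm pz j)) with
    (sm pz j + sm (fun j0 => pz (j + j0)%nat) (S n) - 1) by ring. exact HN. Qed.

Lemma zf_pos j : 0 <= zf pz j. Proof. unfold zf. pose proof (sm_pz_le1 j). lra. Qed.
Lemma zf_dec j : zf pz (S j) <= zf pz j.
Proof. unfold zf. rewrite sm_S. pose proof (pz_pos j). lra. Qed.

Lemma zf_cv0 : Un_cv (zf pz) 0.
Proof. intros e He. destruct (proj2 hpz e He) as [N HN]. exists (S N). intros n Hn.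
  destruct n as [|n]; [lia|]. specialize (HN n ltac:(lia)). unfold Rdist in *.
  rewrite sm_R0 in HN. unfold zf. replace (1 - sm pz (S n) - 0) with (- (sm pz (S n) - 1)) by ring.
  rewrite Rabs_Ropp. exact HN. Qed.

Lemma zf_id K : sm (fun j => zf pz (S j)) K = sm (fun k => INR k * pz k) K + INR K * zf pz K.
Proof. induction K. simpl. unfold zf. simpl. lra.
  rewrite !sm_S, IHK. unfold zf. rewrite sm_S, S_INR. ring. Qed.

Variable m : R.
Hypothesis hm : infinite_sum (fun k => INR k * pz k) m.

Lemma zf_mean K : sm (fun j => zf pz (S j)) K <= m.
Proof. rewrite zf_id. apply Rle_trans with (m + INR K * 0); [|rewrite Rmult_0_r; lra].
  apply (le_lim_eventually _ (fun L => m + INR K * zf pz L) (m + INR K * 0) K).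
  2: { apply CV_plus. intros e He; exists 0%nat; intros; unfold Rdist; rewrite Rminus_diag, Rabs_R0; lra.
       apply CV_mult. intros e He; exists 0%nat; intros; unfold Rdist; rewrite Rminus_diag, Rabs_R0; lra.
       apply zf_cv0. }
  intros L HL.
  assert (H1 : sm (fun k => INR k * pz k) L <= m).
  { apply Rle_trans with (sm (fun k => INR k * pz k) (S L)).
    apply sm_mono_n; [|lia]. intros k; apply Rmult_le_pos; [apply pos_INR|apply pz_pos].
    rewrite <- sm_R0. apply partial_le_sum; auto. intros k; apply Rmult_le_pos; [apply pos_INR|apply pz_pos]. }
  assert (H2 : sm (fun k => INR k * pz k) K + INR K * (sm pz L - sm pz K) <= sm (fun k => INR k * pz k) L).
  { replace L with (K + (L - K))%nat by lia. rewrite !sm_add.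
    replace (K + (L - K) - K)%nat with (L - K)%nat by lia.
    replace (sm pz K + sm (fun j => pz (K + j)%nat) (L - K) - sm pz K) with (sm (fun j => pz (K + j)%nat) (L - K)) by ring.
    rewrite <- sm_scal. apply Rplus_le_compat_l. apply sm_le. intros j _.
    apply Rmult_le_compat_r; [apply pz_pos|apply le_INR; lia]. }
  unfold zf. lra. Qed.
End PZ.


Lemma lim_step (F G : nat -> R) l Q B : (forall y, 0 <= F y) ->
  (forall B', sum_f_R0 F B' <= sum_f_R0 G B' + Q) -> infinite_sum G l -> sum_f_R0 F B <= l + Q.
Proof. intros HF H HG. apply (le_lim_eventually _ (fun n => sum_f_R0 G n + Q) (l + Q) B).
  - intros n Hn. eapply Rle_trans; [|apply H]. rewrite !sm_R0. apply sm_mono_n; auto; lia.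
  - apply CV_plus; auto. intros e He; exists 0%nat; intros; unfold Rdist; rewrite Rminus_diag, Rabs_R0; lra. Qed.

Section Key.
Variable P : nat -> nat -> R.
Hypothesis Ppos : forall x y, 0 <= P x y.
Hypothesis Psum : forall x, infinite_sum (P x) 1.
Variables eps M : R.
Hypothesis heps : 0 < eps.
Hypothesis HM : 0 < M.
Variable Mn : nat.
Hypothesis HMn : M <= INR Mn.
Variable z : nat -> R.
Hypothesis zpos : forall j, 0 <= z j.
Hypothesis hq : forall x j, sum_f_R0 (fun k => if (k + j <=? x)%nat then P x k else 0) x <= z j.
Definition T (x y : nat) : R := if Rle_dec (INR y - INR x) M then (INR y - INR x) * P x y else 0.
Hypothesis hdrift : forall x, exists sx, infinite_sum (T x) sx /\ eps <= sx.
Variable s : nat -> R.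
Hypothesis spos : forall m, 0 < s m.
Hypothesis sdec : forall m, s (S m) <= s m.
Variable Sb : R.
Hypothesis ssum : forall K, sm s K <= Sb.
Hypothesis skey : forall k, sm (fun j => (s (k - S j)%nat - s (k + Mn)%nat) * z (S j)) k <= eps * s (k + Mn)%nat.
Variable i : nat.

Definition ff (y : nat) : R := 1 + Sb - sm s (y - i).

Lemma sm_s_pos n : 0 <= sm s n. Proof. apply sm_nonneg; intros; apply Rlt_le, spos. Qed.

Lemma ff_bounds y : 1 <= ff y <= 1 + Sb.
Proof. unfold ff. pose proof (ssum (y - i)). pose proof (sm_s_pos (y - i)). lra. Qed.

Lemma sdec_gen a b : (a <= b)%nat -> s b <= s a.
Proof. apply noninc_gen; auto. Qed.

Lemma Ppartial x B : sum_f_R0 (P x) B <= 1.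
Proof. apply partial_le_sum; auto. Qed.

Lemma key_lt x B : (x <= i)%nat -> sum_f_R0 (fun y => P x y * ff y) B <= ff x.
Proof. intros Hx. unfold ff at 2. replace (x - i)%nat with 0%nat by lia. simpl sm.
  apply Rle_trans with (sum_f_R0 (fun y => (1 + Sb) * P x y) B).
  { apply sum_Rle. intros y _. pose proof (ff_bounds y). pose proof (Ppos x y). nra. }
  rewrite sm_R0, sm_scal, <- sm_R0. pose proof (Ppartial x B).
  pose proof (ssum 0). simpl in H0. nra. Qed.

Lemma key_eq B : sum_f_R0 (fun y => P i y * ff y) B <= 1 + Sb - s Mn * eps / M.
Proof. destruct (hdrift i) as [si [Hsi Hei]].
  assert (HG := inf_sum_comb (P i) (T i) (1 + Sb) (s Mn / M) 1 si (Psum i) Hsi).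
  assert (HF : forall y, 0 <= P i y * ff y).
  { intros y. pose proof (ff_bounds y). pose proof (Ppos i y). nra. }
  assert (HB : forall B', sum_f_R0 (fun y => P i y * ff y) B' <=
      sum_f_R0 (fun j => (1 + Sb) * P i j - s Mn / M * T i j) B' + 0).
  { intros B'. rewrite Rplus_0_r. apply sum_Rle. intros y _.
    pose proof (Ppos i y). pose proof (spos Mn). assert (Hs0 : s Mn <= s 0) by (apply sdec_gen; lia).
    unfold ff, T. destruct (Nat.le_gt_cases y i) as [Hy|Hy].
    - replace (y - i)%nat with 0%nat by lia. simpl sm.
      assert (INR y <= INR i) by (apply le_INR; auto).
      destruct (Rle_dec (INR y - INR i) M).
      + assert (0 <= s Mn / M) by (apply Rmult_le_pos; [lra|apply Rlt_le, Rinv_0_lt_compat; lra]).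
        assert ((INR y - INR i) * P i y <= 0) by nra. nra.
      + lra.
    - assert (Hd : s 0 <= sm s (y - i)).
      { destruct (y - i)%nat as [|d] eqn:E; [lia|]. rewrite sm_shift.
        pose proof (sm_nonneg (fun j => s (S j)) d (fun j _ => Rlt_le _ _ (spos (S j)))). lra. }
      destruct (Rle_dec (INR y - INR i) M).
      + assert (s Mn / M * ((INR y - INR i) * P i y) <= s Mn * P i y).
        { unfold Rdiv. replace (s Mn * / M * ((INR y - INR i) * P i y)) with
            (s Mn * P i y * ((INR y - INR i) / M)) by (field; lra).
          assert ((INR y - INR i) / M <= 1).
          { apply Rmult_le_reg_r with M; auto. unfold Rdiv. rewrite Rmult_assoc, Rinv_l; lra. }
          assert (0 <= s Mn * P i y) by nra. nra. }
        nra.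
      + pose proof (sm_s_pos (y - i)). nra. }
  pose proof (lim_step _ _ _ 0 B HF HB HG).
  assert (s Mn / M * si >= s Mn * eps / M).
  { unfold Rdiv. assert (0 < s Mn * / M) by (apply Rmult_lt_0_compat; [auto|apply Rinv_0_lt_compat; lra]). nra. }
  lra. Qed.

Lemma key_gt x B : (i < x)%nat -> sum_f_R0 (fun y => P x y * ff y) B <= ff x.
Proof. intros Hix.
  set (k := (x - i)%nat). set (u := s (k + Mn)%nat).
  assert (Hu : 0 < u) by apply spos.
  set (a := fun jj => if (jj <=? k)%nat then s (k - jj)%nat - u else 0).
  assert (Ha : forall jj, 0 <= a jj).
  { intros jj; unfold a. destruct (jj <=? k)%nat; [|lra].
    assert (s (k + Mn)%nat <= s (k - jj)%nat) by (apply sdec_gen; lia). unfold u; lra. }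
  assert (G1 : forall d, sm s k - sm s (k - d) <= u * INR d + sm (fun j => a (S j)) d).
  { induction d. replace (k - 0)%nat with k by lia. simpl. lra.
    rewrite sm_S, S_INR. destruct (Nat.lt_ge_cases d k).
    - replace (k - d)%nat with (S (k - S d)) in IHd by lia. rewrite sm_S in IHd.
      unfold a at 2. destruct (Nat.leb_spec (S d) k); [|lia]. lra.
    - replace (k - S d)%nat with (k - d)%nat by lia. pose proof (Ha (S d)). lra. }
  set (Q := sm (fun y => P x y * sm (fun j => a (S j)) (x - y)) x).
  assert (HQ : Q <= eps * u).
  { unfold Q.
    rewrite (sm_ext _ (fun y => sm (fun j => if (j <? x - y)%nat then P x y * a (S j) else 0) x)).
    2: { intros y Hy. rewrite (sm_ind _ (x - y) x) by lia. rewrite <- sm_scal. apply sm_ext.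
         intros j _. destruct (j <? x - y)%nat; ring. }
    rewrite sm_swap.
    apply Rle_trans with (sm (fun j => a (S j) * z (S j)) x).
    { apply sm_le. intros j Hj.
      rewrite (sm_ext _ (fun y => a (S j) * (if (y + S j <=? x)%nat then P x y else 0))).
      2: { intros y _. destruct (Nat.ltb_spec j (x - y)); destruct (Nat.leb_spec (y + S j) x); try lia; ring. }
      rewrite sm_scal. apply Rmult_le_compat_l; auto.
      eapply Rle_trans; [|apply hq]. rewrite sm_R0. apply sm_mono_n; [|lia].
      intros y; destruct (y + S j <=? x)%nat; auto; lra. }
    replace x with (k + (x - k))%nat by (unfold k; lia). rewrite sm_add.
    rewrite (sm_ext (fun j => a (S (k + j)%nat) * z (S (k + j)%nat)) (fun _ => 0)).
    2: { intros j _. unfold a. destruct (Nat.leb_spec (S (k + j)) k); [lia|ring]. }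
    rewrite sm_const, Rmult_0_r, Rplus_0_r.
    eapply Rle_trans; [|apply skey]. right. apply sm_ext. intros j Hj. unfold a.
    destruct (Nat.leb_spec (S j) k); [|lia]. reflexivity. }
  destruct (hdrift x) as [sx [Hsx Hex]].
  assert (HG := inf_sum_comb (P x) (T x) (ff x) u 1 sx (Psum x) Hsx).
  assert (HF : forall y, 0 <= P x y * ff y).
  { intros y. pose proof (ff_bounds y). pose proof (Ppos x y). nra. }
  assert (Hffx : ff x = 1 + Sb - sm s k) by reflexivity.
  assert (HB : forall B', sum_f_R0 (fun y => P x y * ff y) B' <=
      sum_f_R0 (fun j => ff x * P x j - u * T x j) B' + Q).
  { intros B'.
    apply Rle_trans with (sum_f_R0 (fun j => ff x * P x j - u * T x j) B' +
       sum_f_R0 (fun y => if (y <? x)%nat then P x y * sm (fun j => a (S j)) (x - y) else 0) B').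
    { rewrite !sm_R0. rewrite <- sm_plus. apply sm_le. intros y _.
      pose proof (Ppos x y). unfold T, ff. fold k. destruct (Nat.ltb_spec y x).
      - replace (y - i)%nat with (k - (x - y))%nat by (unfold k; lia).
        specialize (G1 (x - y)%nat).
        destruct (Rle_dec (INR y - INR x) M).
        + rewrite minus_INR in G1 by lia. nra.
        + exfalso. assert (INR y <= INR x) by (apply le_INR; lia). lra.
      - replace (y - i)%nat with (k + (y - x))%nat by (unfold k; lia). rewrite sm_add.
        destruct (Rle_dec (INR y - INR x) M).
        + assert (Hd : (y - x <= Mn)%nat).
          { apply INR_le. rewrite minus_INR by lia. lra. }
          assert (HH : INR (y - x) * u <= sm (fun j => s (k + j)%nat) (y - x)).
          { rewrite <- sm_const. apply sm_le. intros j Hj. apply sdec_gen. lia. }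
          rewrite minus_INR in HH by lia. nra.
        + pose proof (sm_nonneg (fun j => s (k + j)%nat) (y - x) (fun j _ => Rlt_le _ _ (spos _))). nra. }
    apply Rplus_le_compat_l. unfold Q. rewrite sm_R0.
    eapply Rle_trans. apply (sm_mono_n _ (S B') (S B' + x)).
    { intros y. destruct (y <? x)%nat; [|lra]. apply Rmult_le_pos; auto. apply sm_nonneg; auto. }
    lia. rewrite <- sm_ind by lia. lra. }
  pose proof (lim_step _ _ _ Q B HF HB HG).
  assert (u * sx >= u * eps) by nra. lra. Qed.
End Key.


Theorem proposition6
  (P : nat -> nat -> R) (Pstoch : stochastic P)
  (eps M : R) (heps : 0 < eps)
  (hdrift : forall i : nat, exists s : R,
      infinite_sum
        (fun j => if Rle_dec (INR j - INR i) M then (INR j - INR i) * P i j else 0) s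
      /\ eps <= s)
  (pz : nat -> R) (hpz : pmf pz)
  (hmean : exists m : R, infinite_sum (fun k => INR k * pz k) m)
  (hjump : forall i j : nat, exists t : R,
      infinite_sum (fun k => pz (k + j)%nat) t /\
      sum_f_R0 (fun k => if Nat.leb (k + j) i then P i k else 0) i <= t) :
  exists gamma : R, 0 < gamma /\
    exists C : R, forall i : nat, exp_loc_le P gamma i C.
Proof.
  assert (Ppos : forall x y, 0 <= P x y) by (intros x y; apply (proj1 (Pstoch x))).
  assert (Psum : forall x, infinite_sum (P x) 1) by (intros x; apply (proj2 (Pstoch x))).
  assert (hdr : forall x, exists sx, infinite_sum (T P M x) sx /\ eps <= sx) by exact hdrift.
  assert (HM : 0 < M /\ eps <= M).
  { destruct (hdr 0%nat) as [s0 [Hs0 He0]].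
    assert (s0 <= Rmax M 0 * 1).
    { apply (sum_le_lim (T P M 0) (fun j => Rmax M 0 * P 0%nat j)); auto.
      2: apply inf_sum_scal; auto.
      intros j. unfold T. pose proof (Ppos 0%nat j). pose proof (Rmax_l M 0). pose proof (Rmax_r M 0).
      destruct (Rle_dec (INR j - INR 0) M); nra. }
    unfold Rmax in H. destruct (Rle_dec M 0); lra. }
  destruct HM as [HM HeM].
  destruct (INR_unbounded M) as [Mn HMn]. assert (HMn' : M <= INR Mn) by lra.
  destruct hmean as [m hm].
  set (z := zf pz).
  assert (hq : forall x j, sum_f_R0 (fun k => if (k + j <=? x)%nat then P x k else 0) x <= z j).
  { intros x j. destruct (hjump x j) as [t [Ht1 Ht2]].
    rewrite (uniqueness_sum _ _ _ Ht1 (zf_sum pz hpz j)) in Ht2. exact Ht2. }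
  assert (zpos : forall j, 0 <= z j) by (intros; apply zf_pos; auto).
  assert (zdec : forall j, z (S j) <= z j) by (intros; apply zf_dec; auto).
  assert (zmu : forall K, sm (fun j => z (S j)) K <= m) by (intros; apply zf_mean; auto).
  destruct (analysis eps m Mn z heps zpos zdec zmu) as [s [Sb [spos [sdec [ssum skey]]]]].
  set (c := 1 + Sb). set (u0 := s Mn). set (c' := c - u0 * eps / M).
  assert (Hu0 : u0 <= Sb).
  { specialize (ssum (S Mn)). rewrite sm_S in ssum.
    pose proof (sm_nonneg s Mn (fun j _ => Rlt_le _ _ (spos j))). unfold u0; lra. }
  assert (Hu0p : 0 < u0) by apply spos.
  assert (Hq : 0 < u0 * eps / M) by (apply Rdiv_lt_0_compat; [apply Rmult_lt_0_compat|]; lra).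
  assert (Hq2 : u0 * eps / M <= u0).
  { apply Rmult_le_reg_r with M; auto. unfold Rdiv. rewrite Rmult_assoc, Rinv_l by lra. nra. }
  assert (Hc' : 1 <= c') by (unfold c', c; lra).
  set (gamma := ln (c / c')).
  assert (Hcc : 1 < c / c').
  { apply Rmult_lt_reg_r with c'. lra. unfold Rdiv. rewrite Rmult_assoc, Rinv_l by lra. unfold c'; lra. }
  assert (Hexp : exp gamma = c / c') by (unfold gamma; apply exp_ln; lra).
  exists gamma. split.
  { unfold gamma. rewrite <- ln_1. apply ln_increasing; lra. }
  exists c. intros i n B.
  assert (Hff : forall x, 1 <= ff s Sb i x <= c).
  { intros x. apply (ff_bounds s spos Sb ssum). }
  assert (Hkey : forall x, exp (gamma * indic (Nat.eqb x i)) *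
       sum_f_R0 (fun y => P x y * ff s Sb i y) B <= ff s Sb i x).
  { intros x. destruct (Nat.eqb_spec x i) as [->|Hne]; simpl indic.
    - rewrite Rmult_1_r, Hexp.
      assert (H := key_eq P Ppos Psum eps M HM Mn hdr s spos sdec Sb ssum i B).
      fold c u0 c' in H.
      assert (0 <= c / c') by lra.
      apply Rle_trans with (c / c' * c'). apply Rmult_le_compat_l; auto.
      unfold ff. replace (i - i)%nat with 0%nat by lia. simpl sm.
      right. unfold Rdiv. rewrite Rmult_assoc, Rinv_l by lra. rewrite Rmult_1_r. unfold c. lra.
    - rewrite Rmult_0_r, exp_0, Rmult_1_l.
      destruct (Nat.lt_ge_cases i x).
      + eapply key_gt with (M:=M) (eps:=eps) (Mn:=Mn) (z:=z); eauto.
      + eapply key_lt; eauto. }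
  assert (Hind : forall n x, trunc_exp P gamma i B n x <= ff s Sb i x).
  { induction n0 as [|n0 IH]; intros x; simpl trunc_exp.
    - destruct (Nat.eqb_spec x i) as [->|Hne]; simpl indic.
      + rewrite Rmult_1_r, Hexp. unfold ff. replace (i - i)%nat with 0%nat by lia. simpl sm.
        fold c. apply Rmult_le_reg_r with c'. lra. unfold Rdiv. rewrite Rmult_assoc, Rinv_l by lra.
        assert (0 < c) by (unfold c; lra). nra.
      + rewrite Rmult_0_r, exp_0. apply Hff.
    - eapply Rle_trans; [|apply (Hkey x)]. apply Rmult_le_compat_l. apply Rlt_le, exp_pos.
      apply sum_Rle. intros y _. apply Rmult_le_compat_l; auto. }
  specialize (Hind n i). unfold ff in Hind. replace (i - i)%nat with 0%nat in Hind by lia.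
  simpl sm in Hind. unfold c. lra.
Qed.
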